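(* Let $J,J',J''\subseteq S$ with $J=J'\cup J''$ and $j'<j''$ for all $j'\in J'$, $j''\in J''$. Then in $A$: $$\tau^+_J=\tau^+_{J'}\tau^+_{J''}+(-1)^{\#J'}q\,\tau^-_{J'}\tau^-_{J''},\qquad \tau^-_J=\tau^-_{J'}\tau^+_{J''}+(-1)^{\#J'}\tau^+_{J'}\tau^-_{J''}.$$
   Context: $S$ is a finite set with a total order $<$, $R$ a commutative ring with $1$, $q\in R$, $A=R\langle t_s\mid s\in S\rangle$ the free associative algebra. For $J=\{j_1<\dots<j_{\#J}\}\subseteq S$, $t_J=t_{j_1}\cdots t_{j_{\#J}}$ ($t_\emptyset=1$); for $I=\{j_{\alpha_1}<\dots<j_{\alpha_{\#I}}\}\subseteq J$, $\ell_J(I)=\sum_{\nu=1}^{\#I}(\alpha_\nu-\nu)$; $\tau^-_J=\sum_{I\subseteq J,\ \#I\text{ odd}}(-1)^{\ell_J(I)}(-q)^{(\#I-1)/2}t_{J\setminus I}$ and $\tau^+_J=\sum_{I\subseteq J,\ \#I\text{ even}}(-1)^{\ell_J(I)}(-q)^{\#I/2}t_{J\setminus I}$ (so $\tau^+_\emptyset=1$, $\tau^-_\emptyset=0$). *)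

(* Defs.v *)
From HB Require Import structures.
From mathcomp Require Import all_boot all_order all_algebra.
From mathcomp Require Import monalg.
Set Implicit Arguments. Unset Strict Implicit. Unset Printing Implicit Defensive.
Import Order.TTheory GRing.Theory.
Local Open Scope ring_scope.

(* The free associative algebra A = R<t_s | s in S> is the monoid algebra
   of the free monoid {fmonom S} (words over S) with coefficients in R. *)
Notation freealg R S := {malg R[fmonom S]}.

Section Tau.
Context {d : Order.disp_t} {S : finOrderType d} {R : comNzRingType}.

Definition tgen (s : S) : freealg R S := << FMonom [:: s] >>.

Definition ordseq (J : {set S}) : seq S := sort <=%O (enum J).

Definition tJ (J : {set S}) : freealg R S :=
  \prod_(j <- ordseq J) tgen j.

(* ell_J(I) = sum_nu (alpha_nu - nu), where I = {j_{alpha_1} < ... },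
   alpha_nu = 1 + position in J, nu = 1 + position in I
   (the shift by 1 cancels). *)
Definition ellJ (J I : {set S}) : nat :=
  \sum_(x <- ordseq I) (index x (ordseq J) - index x (ordseq I))%N.

Definition tauM (q : R) (J : {set S}) : freealg R S :=
  \sum_(I in powerset J | odd #|I|)
     ((-1) ^+ ellJ J I * (- q) ^+ (#|I|.-1)./2) *: tJ (J :\: I).

Definition tauP (q : R) (J : {set S}) : freealg R S :=
  \sum_(I in powerset J | ~~ odd #|I|)
     ((-1) ^+ ellJ J I * (- q) ^+ (#|I| %/ 2)) *: tJ (J :\: I).
End Tau.

(* Main.v *)
Require Import Defs.
From HB Require Import structures.
From mathcomp Require Import all_boot all_order all_algebra.
From mathcomp Require Import monalg.
From mathcomp Require Import ring zify.
Import Order.TTheory GRing.Theory.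
Local Open Scope ring_scope.
Set Implicit Arguments. Unset Strict Implicit.

Section Aux.
Variables (d : Order.disp_t) (S : finOrderType d) (R : comNzRingType).
Implicit Types (J I : {set S}).

Lemma scalerAr' (a : R) (x y : freealg R S) : x * (a *: y) = a *: (x * y).
Proof.
have H : forall g : freealg R S, g * a%:MP = a *: g.
  move=> g; rewrite {1}(monalgE g) [in RHS](monalgE g) mulr_suml scaler_sumr.
  apply: eq_bigr => k _.
  rewrite -mul_malgC !malgM_def /malgC fgmulUU fgmulUU mulm1 mul1m mulrC //.
by rewrite -mul_malgC mulrA H scalerAl.
Qed.

Lemma ordseq_sorted J : sorted <%O (ordseq J).
Proof. by rewrite /ordseq sort_lt_sorted enum_uniq. Qed.

Lemma mem_ordseq J x : (x \in ordseq J) = (x \in J).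
Proof. by rewrite /ordseq mem_sort mem_enum. Qed.

Lemma size_ordseq J : size (ordseq J) = #|J|.
Proof. by rewrite /ordseq size_sort cardE. Qed.

Lemma index_count (s : seq S) x : sorted <%O s -> x \in s ->
  index x s = count (fun y => (y < x)%O) s.
Proof.
elim: s => [//|y s IH] /= Hs.
rewrite inE; case: (eqVneq x y) => [->|Hne] /= Hx.
  rewrite ltxx /=; apply/esym/eqP; rewrite -leqn0 leqNgt -has_count.
  apply/hasPn => z Hz; rewrite -leNgt le_eqVlt; apply/orP; right.
  by move: (order_path_min lt_trans Hs) => /allP; apply.
have Hyx : (y < x)%O.
  by move: (order_path_min lt_trans Hs) => /allP; apply.
rewrite Hyx IH //.
by move: Hs; case: s {IH Hx} => // z s /= /andP[].
Qed.

Lemma ordseq_sub I J : I \subset J ->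
  ordseq I = filter (fun y => y \in I) (ordseq J).
Proof.
move=> HIJ; apply: lt_sorted_eq; first exact: ordseq_sorted.
  by apply: sorted_filter; [exact: lt_trans| exact: ordseq_sorted].
move=> x; rewrite mem_filter !mem_ordseq.
by case Hx: (x \in I) => //=; rewrite (subsetP HIJ).
Qed.

Lemma index_sub I J x : I \subset J -> x \in I ->
  (index x (ordseq I) <= index x (ordseq J))%N.
Proof.
move=> HIJ Hx.
rewrite !index_count ?ordseq_sorted ?mem_ordseq ?(subsetP HIJ) //.
rewrite (ordseq_sub HIJ) count_filter; apply: sub_count => y /=.
by case/andP.
Qed.

Lemma ordseqU J1 J2 : (forall a b, a \in J1 -> b \in J2 -> (a < b)%O) ->
  ordseq (J1 :|: J2) = ordseq J1 ++ ordseq J2.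
Proof.
move=> H; apply: lt_sorted_eq; first exact: ordseq_sorted.
  rewrite lt_sorted_pairwise pairwise_cat -!lt_sorted_pairwise !ordseq_sorted.
  rewrite !andbT; apply/allrelP => a b; rewrite !mem_ordseq; exact: H.
by move=> x; rewrite mem_cat !mem_ordseq inE.
Qed.

Lemma tJU J1 J2 : (forall a b, a \in J1 -> b \in J2 -> (a < b)%O) ->
  (tJ (J1 :|: J2) : freealg R S) = tJ J1 * tJ J2.
Proof. by move=> H; rewrite /tJ ordseqU // big_cat. Qed.

Lemma sum_const_seq (s : seq S) (c : nat) : (\sum_(x <- s) c = size s * c)%N.
Proof. by elim: s => [|x s IH]; rewrite ?big_nil ?big_cons ?IH. Qed.

Lemma ellU J1 J2 I1 I2 : (forall a b, a \in J1 -> b \in J2 -> (a < b)%O) ->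
  I1 \subset J1 -> I2 \subset J2 ->
  ellJ (J1 :|: J2) (I1 :|: I2) =
  (ellJ J1 I1 + ellJ J2 I2 + #|I2| * (#|J1| - #|I1|))%N.
Proof.
move=> H H1 H2.
have HI : forall a b, a \in I1 -> b \in I2 -> (a < b)%O.
  by move=> a b Ha Hb; apply: H; [exact: (subsetP H1)|exact: (subsetP H2)].
rewrite /ellJ !ordseqU // big_cat /= -addnA; congr (_ + _)%N.
  apply: eq_big_seq => x; rewrite mem_ordseq => Hx.
  by rewrite !index_cat !mem_ordseq Hx (subsetP H1).
have Hle : (#|I1| <= #|J1|)%N by exact: subset_leq_card.
rewrite -[#|I2|]size_ordseq -sum_const_seq -big_split /=.
apply: eq_big_seq => x; rewrite mem_ordseq => Hx.
have HxJ2 : x \in J2 := subsetP H2 x Hx.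
have HnJ1 : x \notin J1.
  by apply/negP => Hx1; move: (H x x Hx1 HxJ2); rewrite ltxx.
have HnI1 : x \notin I1 by apply: contra HnJ1; exact: (subsetP H1).
rewrite !index_cat !mem_ordseq (negbTE HnJ1) (negbTE HnI1) !size_ordseq.
have ar : forall A B a b : nat, (B <= A -> b <= a -> A + a - (B + b) = a - b + (A - B))%N by move=> *; lia.
exact: ar Hle (index_sub H2 Hx).
Qed.

Lemma cardU_disj J1 J2 I1 I2 : (forall a b, a \in J1 -> b \in J2 -> (a < b)%O) ->
  I1 \subset J1 -> I2 \subset J2 -> #|I1 :|: I2| = (#|I1| + #|I2|)%N.
Proof.
move=> H H1 H2; rewrite cardsU.
suff -> : I1 :&: I2 = set0 by rewrite cards0 subn0.
apply/setP => x; rewrite !inE; apply/negP => /andP[Ha Hb].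
by move: (H x x (subsetP H1 x Ha) (subsetP H2 x Hb)); rewrite ltxx.
Qed.

Lemma sum_powU (V : nmodType) J1 J2 (P : {set S} -> bool) (F : {set S} -> V) :
  (forall a b, a \in J1 -> b \in J2 -> (a < b)%O) ->
  \sum_(I in powerset (J1 :|: J2) | P I) F I =
  \sum_(I1 in powerset J1) \sum_(I2 in powerset J2 | P (I1 :|: I2)) F (I1 :|: I2).
Proof.
move=> H; rewrite pair_big_dep /=.
rewrite (reindex_onto (fun p : {set S} * {set S} => p.1 :|: p.2)
                      (fun I => (I :&: J1, I :&: J2))) /=; last first.
  move=> I /andP[]; rewrite powersetE => HI _.
  by rewrite -setIUr; apply/setIidPl.
apply: eq_bigl => -[A B] /=; apply/idP/idP.
  case/andP=> /andP[_ HP] /eqP [E1 E2].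
  by rewrite !powersetE HP -E1 -E2 !subsetIr.
case/and3P; rewrite !powersetE => HA HB HP.
rewrite (setUSS HA HB) HP /=; apply/eqP; apply: (f_equal2 pair); apply/setP => x;
  rewrite !inE; apply/idP/idP.
- case/andP=> /orP[Hx|Hx] Hx1 //.
  by move: (H x x Hx1 (subsetP HB x Hx)); rewrite ltxx.
- by move=> Hx; rewrite Hx (subsetP HA).
- case/andP=> /orP[Hx|Hx] Hx2 //.
  by move: (H x x (subsetP HA x Hx) Hx2); rewrite ltxx.
- by move=> Hx; rewrite Hx orbT (subsetP HB).
Qed.

Definition cf (q : R) J I : R := (-1) ^+ ellJ J I * (- q) ^+ (#|I|./2).

Lemma termU q J1 J2 I1 I2 : (forall a b, a \in J1 -> b \in J2 -> (a < b)%O) ->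
  I1 \subset J1 -> I2 \subset J2 ->
  cf q (J1 :|: J2) (I1 :|: I2) *: (tJ ((J1 :|: J2) :\: (I1 :|: I2)) : freealg R S) =
  ((-1) ^+ (odd #|I2| && (odd #|J1| (+) odd #|I1|)) * (- q) ^+ (odd #|I1| && odd #|I2|))
   *: ((cf q J1 I1 *: tJ (J1 :\: I1)) * (cf q J2 I2 *: tJ (J2 :\: I2))).
Proof.
move=> H H1 H2.
have E : (J1 :|: J2) :\: (I1 :|: I2) = (J1 :\: I1) :|: (J2 :\: I2).
  apply/setP => x; rewrite !inE.
  case Hx1: (x \in J1); case Hx2: (x \in J2) => /=.
  - by move: (H x x Hx1 Hx2); rewrite ltxx.
  - have -> : (x \in I2) = false by apply/negP => /(subsetP H2); rewrite Hx2.
    by case: (x \in I1).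
  - have -> : (x \in I1) = false by apply/negP => /(subsetP H1); rewrite Hx1.
    by case: (x \in I2).
  - by rewrite !andbF.
rewrite E. rewrite tJU; last first.
  by move=> a b; rewrite !inE => /andP[_ Ha] /andP[_ Hb]; exact: H.
rewrite -scalerAl scalerAr' !scalerA; congr (_ *: _).
rewrite /cf ellU // (cardU_disj H H1 H2) halfD !exprD.
rewrite -[(-1) ^+ (#|I2| * _)]signr_odd oddM oddB ?subset_leq_card //.
ring.
Qed.


Section Cases.
Variables (q : R) (J1 J2 I1 I2 : {set S}).
Hypotheses (H : forall a b, a \in J1 -> b \in J2 -> (a < b)%O)
  (H1 : I1 \subset J1) (H2 : I2 \subset J2).
Let X := ((cf q J1 I1 *: (tJ (J1 :\: I1) : freealg R S)) * (cf q J2 I2 *: tJ (J2 :\: I2))).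
Let L := cf q (J1 :|: J2) (I1 :|: I2) *: (tJ ((J1 :|: J2) :\: (I1 :|: I2)) : freealg R S).

Lemma termEE : ~~ odd #|I1| -> ~~ odd #|I2| -> L = X.
Proof.
move=> /negbTE E1 /negbTE E2; rewrite /L (termU q H H1 H2) E1 E2 -[RHS]scale1r.
congr (_ *: _) => /=; by rewrite expr0 mulr1.
Qed.
Lemma termOE : odd #|I1| -> ~~ odd #|I2| -> L = X.
Proof.
move=> E1 /negbTE E2; rewrite /L (termU q H H1 H2) E1 E2 -[RHS]scale1r.
congr (_ *: _) => /=; by rewrite expr0 mulr1.
Qed.
Lemma termOO : odd #|I1| -> odd #|I2| -> L = ((-1) ^+ #|J1| * q) *: X.
Proof.
move=> E1 E2; rewrite /L (termU q H H1 H2) E1 E2.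
congr (_ *: _) => /=; rewrite -[(-1) ^+ #|J1|]signr_odd; case: (odd #|J1|) => /=; ring.
Qed.
Lemma termEO : ~~ odd #|I1| -> odd #|I2| -> L = (-1) ^+ #|J1| *: X.
Proof.
move=> /negbTE E1 E2; rewrite /L (termU q H H1 H2) E1 E2.
congr (_ *: _) => /=; rewrite -[(-1) ^+ #|J1|]signr_odd; case: (odd #|J1|) => /=; ring.
Qed.
Lemma oddU : odd #|I1 :|: I2| = odd #|I1| (+) odd #|I2|.
Proof. by rewrite (cardU_disj H H1 H2) oddD. Qed.
End Cases.
End Aux.

Theorem lemma3p1 (d : Order.disp_t) (S : finOrderType d) (R : comNzRingType)
  (q : R) (J J' J'' : {set S}) :
  J = J' :|: J'' ->
  (forall j' j'', j' \in J' -> j'' \in J'' -> (j' < j'')%O) ->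
  tauP q J = tauP q J' * tauP q J''
             + ((-1) ^+ #|J'| * q) *: (tauM q J' * tauM q J'')
  /\
  tauM q J = tauM q J' * tauP q J''
             + (-1) ^+ #|J'| *: (tauP q J' * tauM q J'').
Proof.
move=> -> H.
have halfodd : forall n, odd n -> (n.-1)./2 = n./2.
  by case=> // n /= /negbTE Hn; rewrite uphalf_half Hn.
have tP : forall J0, tauP q J0 =
    \sum_(I in powerset J0 | ~~ odd #|I|) cf q J0 I *: (tJ (J0 :\: I) : freealg R S).
  by move=> J0; rewrite /tauP; apply: eq_bigr => I _; rewrite divn2.
have tM : forall J0, tauM q J0 =
    \sum_(I in powerset J0 | odd #|I|) cf q J0 I *: (tJ (J0 :\: I) : freealg R S).
  by move=> J0; rewrite /tauM; apply: eq_bigr => I /andP[_ HI]; rewrite halfodd.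
pose F := fun I => cf q (J' :|: J'') I *: (tJ ((J' :|: J'') :\: I) : freealg R S).
have E1 := @sum_powU d S (freealg R S) J' J'' (fun I => ~~ odd #|I|) F H.
have E2 := @sum_powU d S (freealg R S) J' J'' (fun I => odd #|I|) F H.
have LP : tauP q (J' :|: J'') = \sum_(I1 in powerset J')
    \sum_(I2 in powerset J'' | ~~ odd #|I1 :|: I2|) F (I1 :|: I2).
  by rewrite tP; exact: E1.
have LM : tauM q (J' :|: J'') = \sum_(I1 in powerset J')
    \sum_(I2 in powerset J'' | odd #|I1 :|: I2|) F (I1 :|: I2).
  by rewrite tM; exact: E2.
rewrite LP LM !tP !tM /F.
split.
  rewrite [LHS](bigID (fun I1 : {set S} => odd #|I1|)) /=.
  rewrite addrC; congr (_ + _).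
    rewrite mulr_suml; apply: eq_bigr => I1 /andP[HI1 HoI1].
    rewrite mulr_sumr (eq_bigl (fun I2 => (I2 \in powerset J'') && ~~ odd #|I2|)); last first.
      move=> I2 /=; case HI2: (I2 \in powerset J'') => //=.
      have HI1' : I1 \subset J' by rewrite -powersetE; exact: HI1.
      have HI2' : I2 \subset J'' by rewrite -powersetE; exact: HI2.
      by rewrite (oddU H HI1' HI2'); move: HoI1; case: (odd _) => //= _; rewrite ?negbK.
    apply: eq_bigr => I2 /andP[HI2 HoI2].
    have HI1' : I1 \subset J' by rewrite -powersetE; exact: HI1.
  have HI2' : I2 \subset J'' by rewrite -powersetE; exact: HI2.
  exact: termEE.
  rewrite mulr_suml scaler_sumr; apply: eq_bigr => I1 /andP[HI1 HoI1].
  rewrite mulr_sumr scaler_sumr (eq_bigl (fun I2 => (I2 \in powerset J'') && odd #|I2|)); last first.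
    move=> I2 /=; case HI2: (I2 \in powerset J'') => //=.
    have HI1' : I1 \subset J' by rewrite -powersetE; exact: HI1.
      have HI2' : I2 \subset J'' by rewrite -powersetE; exact: HI2.
      by rewrite (oddU H HI1' HI2'); move: HoI1; case: (odd _) => //= _; rewrite ?negbK.
  apply: eq_bigr => I2 /andP[HI2 HoI2].
  have HI1' : I1 \subset J' by rewrite -powersetE; exact: HI1.
  have HI2' : I2 \subset J'' by rewrite -powersetE; exact: HI2.
  exact: termOO.
rewrite [LHS](bigID (fun I1 : {set S} => odd #|I1|)) /=.
congr (_ + _).
  rewrite mulr_suml; apply: eq_bigr => I1 /andP[HI1 HoI1].
  rewrite mulr_sumr (eq_bigl (fun I2 => (I2 \in powerset J'') && ~~ odd #|I2|)); last first.
    move=> I2 /=; case HI2: (I2 \in powerset J'') => //=.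
    have HI1' : I1 \subset J' by rewrite -powersetE; exact: HI1.
      have HI2' : I2 \subset J'' by rewrite -powersetE; exact: HI2.
      by rewrite (oddU H HI1' HI2'); move: HoI1; case: (odd _) => //= _; rewrite ?negbK.
  apply: eq_bigr => I2 /andP[HI2 HoI2].
  have HI1' : I1 \subset J' by rewrite -powersetE; exact: HI1.
  have HI2' : I2 \subset J'' by rewrite -powersetE; exact: HI2.
  exact: termOE.
rewrite mulr_suml scaler_sumr; apply: eq_bigr => I1 /andP[HI1 HoI1].
rewrite mulr_sumr scaler_sumr (eq_bigl (fun I2 => (I2 \in powerset J'') && odd #|I2|)); last first.
  move=> I2 /=; case HI2: (I2 \in powerset J'') => //=.
  have HI1' : I1 \subset J' by rewrite -powersetE; exact: HI1.
      have HI2' : I2 \subset J'' by rewrite -powersetE; exact: HI2.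
      by rewrite (oddU H HI1' HI2'); move: HoI1; case: (odd _) => //= _; rewrite ?negbK.
apply: eq_bigr => I2 /andP[HI2 HoI2].
have HI1' : I1 \subset J' by rewrite -powersetE; exact: HI1.
  have HI2' : I2 \subset J'' by rewrite -powersetE; exact: HI2.
  exact: termEO.
Qed.
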